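(* Let $V=\mathbb R^{2n}$ with basis $e_1,\dots,e_n,e_1',\dots,e_n'$ and scalar product $\langle\cdot,\cdot\rangle$ of signature $(n,n)$ given by $\langle e_i,e_j\rangle=\delta_{ij}$, $\langle e_i',e_j'\rangle=-\delta_{ij}$, $\langle e_i,e_j'\rangle=0$. Let $\Delta_{\mathfrak{so}(n)}\subset\mathfrak{so}(V)$ be the diagonal subalgebra consisting of the endomorphisms $A$ with $Ae_j=\sum_k a_{kj}e_k$ and $Ae_j'=\sum_ka_{kj}e_k'$ for some skew-symmetric real $n\times n$ matrix $(a_{kj})$. Then its generalized first prolongation vanishes: $\Delta_{\mathfrak{so}(n)}^{\langle1\rangle}=0$.
   Context: For a Lie subalgebra $\mathfrak h\subset\mathfrak{so}(V)$, an element $\eta\in V^*\otimes\mathfrak h$ assigns to $u\in V$ an endomorphism $\eta_u\in\mathfrak h$, and we write $\eta(u,v,w)=\langle\eta_uv,w\rangle$ (skew in $v,w$). The generalized first prolongation is $\mathfrak h^{\langle1\rangle}=\{\eta\in V^*\otimes\mathfrak h:\ \eta(u,v,w)+\eta(w,u,v)+\eta(v,w,u)=0\ \text{for all }u,v,w\in V\}$. *)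

(* Defs.v *)
From HB Require Import structures.
From mathcomp Require Import all_boot all_order all_algebra.
Set Implicit Arguments. Unset Strict Implicit. Unset Printing Implicit Defensive.
Import Order.TTheory GRing.Theory Num.Theory.
Local Open Scope ring_scope.

(* V = R^(2n) as column vectors 'cV_(n+n); coordinates 0..n-1 are e_1..e_n,
   coordinates n..2n-1 are e'_1..e'_n. *)

Definition gram (R : ringType) (n : nat) : 'M[R]_(n + n) :=
  block_mx 1%:M 0 0 (- 1%:M).

Definition sprod (R : ringType) (n : nat) (x y : 'cV[R]_(n + n)) : R :=
  (x^T *m gram R n *m y) 0 0.

Definition in_diag_so (R : ringType) (n : nat) (A : 'M[R]_(n + n)) : Prop :=
  exists a : 'M[R]_n, a^T = - a /\ A = block_mx a 0 0 a.

Definition eta3 (R : ringType) (n : nat)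
  (eta : 'cV[R]_(n + n) -> 'M[R]_(n + n)) (u v w : 'cV[R]_(n + n)) : R :=
  sprod (eta u *m v) w.

(* eta in V^* (x) h  is a linear map V -> End(V) with values in h;
   generalized first prolongation h^<1>. *)
Definition in_gen_prolongation (R : ringType) (n : nat)
  (h : 'M[R]_(n + n) -> Prop)
  (eta : {linear 'cV[R]_(n + n) -> 'M[R]_(n + n)}) : Prop :=
  (forall u, h (eta u)) /\
  (forall u v w, eta3 eta u v w + eta3 eta w u v + eta3 eta v w u = 0).

(* Main.v *)
Require Import Defs.
From HB Require Import structures.
From mathcomp Require Import all_boot all_order all_algebra.
Import GRing.Theory Num.Theory.
Local Open Scope ring_scope.

Lemma sprodE (R : realFieldType) n (p q r s : 'cV[R]_n) :
  sprod (col_mx p q) (col_mx r s) = (p^T *m r) 0 0 - (q^T *m s) 0 0.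
Proof.
rewrite /sprod /gram tr_col_mx mul_row_block !mulmx0 addr0 add0r mulmx1 mulmxN mulmx1 mul_row_col mulNmx.
by rewrite !mxE.
Qed.

Lemma entry_delta (R : realFieldType) n (a : 'M[R]_n) (i j : 'I_n) :
  ((a *m delta_mx j (0 : 'I_1))^T *m delta_mx i (0 : 'I_1)) 0 0 = a i j.
Proof. rewrite -colE -colE. by rewrite !mxE. Qed.

Lemma diag_mul (R : realFieldType) n (eta : {linear 'cV[R]_(n + n) -> 'M[R]_(n + n)}) :
  in_gen_prolongation (@in_diag_so R n) eta -> forall w (p q : 'cV[R]_n),
  exists b : 'M[R]_n, eta w *m col_mx p q = col_mx (b *m p) (b *m q).
Proof.
move=> [H _] w p q; have [b [_ ->]] := H w.
by exists b; rewrite mul_block_col !mul0mx addr0 add0r.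
Qed.

Lemma zero_diag (R : realFieldType) n (eta : {linear 'cV[R]_(n + n) -> 'M[R]_(n + n)}) u :
  in_gen_prolongation (@in_diag_so R n) eta ->
  (forall a : 'M[R]_n, eta u = block_mx a 0 0 a -> a = 0) -> eta u = 0.
Proof.
move=> [H _] K; have [a [_ E]] := H u.
by rewrite E (K a E) -[RHS](@block_mx_const _ n n n n 0) /const_mx; congr block_mx; apply/matrixP=> ? ?; rewrite !mxE.
Qed.

Lemma top_zero (R : realFieldType) n (eta : {linear 'cV[R]_(n + n) -> 'M[R]_(n + n)}) (x : 'cV[R]_n) :
  in_gen_prolongation (@in_diag_so R n) eta -> eta (col_mx x 0) = 0.
Proof.
move=> H; apply: (@zero_diag _ _ _ _ H) => a E; apply/matrixP => i j.
have := H.2 (col_mx x 0) (col_mx 0 (delta_mx j 0)) (col_mx 0 (delta_mx i 0)).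
rewrite /eta3 E mul_block_col !mul0mx !addr0 add0r.
have [b ->] := @diag_mul _ _ _ H (col_mx 0 (delta_mx i 0)) x 0.
have [c ->] := @diag_mul _ _ _ H (col_mx 0 (delta_mx j 0)) 0 (delta_mx i 0).
rewrite !sprodE !mulmx0 !trmx0 !mul0mx entry_delta !mxE.
move/eqP; rewrite !(subr0, sub0r, add0r, addr0, oppr_eq0) => /eqP ->.
by rewrite ?mxE.
Qed.

Lemma bot_zero (R : realFieldType) n (eta : {linear 'cV[R]_(n + n) -> 'M[R]_(n + n)}) (x : 'cV[R]_n) :
  in_gen_prolongation (@in_diag_so R n) eta -> eta (col_mx 0 x) = 0.
Proof.
move=> H; apply: (@zero_diag _ _ _ _ H) => a E; apply/matrixP => i j.
have := H.2 (col_mx 0 x) (col_mx (delta_mx j 0) 0) (col_mx (delta_mx i 0) 0).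
rewrite /eta3 E mul_block_col !mul0mx !addr0 add0r.
have [b ->] := @diag_mul _ _ _ H (col_mx (delta_mx i 0) 0) 0 x.
have [c ->] := @diag_mul _ _ _ H (col_mx (delta_mx j 0) 0) (delta_mx i 0) 0.
rewrite !sprodE !mulmx0 !trmx0 !mul0mx entry_delta !mxE.
move/eqP; rewrite !(subr0, sub0r, add0r, addr0, oppr_eq0) => /eqP ->.
by rewrite ?mxE.
Qed.

Theorem lemma2p19 (R : realFieldType) (n : nat)
  (eta : {linear 'cV[R]_(n + n) -> 'M[R]_(n + n)}) :
  in_gen_prolongation (@in_diag_so R n) eta ->
  forall u : 'cV[R]_(n + n), eta u = 0.
Proof.
move=> H u; rewrite -[u]vsubmxK -[usubmx u]addr0 -[dsubmx u]add0r -add_col_mx.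
by rewrite linearD /= top_zero // bot_zero // addr0.
Qed.
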